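(* Let $R$ be a nonzero ring and let $T$ be a tree which is not barren. Then there exist an infinite index set $I$ and a family $\{E_i: i\in I\}$ of injective representations of $T$ in $R\text{-Mod}$ such that $\bigoplus_{i\in I}E_i$ is not an injective representation.
   Context: A quiver is a directed graph; a path is a finite composable sequence of arrows (vertices are trivial paths). A tree is a quiver $T$ with a vertex $r$ (the root) such that for every vertex $w$ there is a unique path from $r$ to $w$. The $i$-th stage of $T$ consists of the vertices $w$ whose path from the root has length $i$. $T$ is barren if the number $n_i$ of vertices in the $i$-th stage is finite for every $i$ and the sequence $n_1,n_2,\dots$ is eventually constant. A representation of $T$ in $R\text{-Mod}$ assigns a left $R$-module $X(v)$ to each vertex and an $R$-linear map $X(a):X(s(a))\to X(t(a))$ to each arrow $a$; morphisms are families of maps commuting with the $X(a)$. Injectivity is in this (Grothendieck) category of representations. *)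

(* Defs.v *)
From HB Require Import structures.
From mathcomp Require Import all_boot all_algebra.
From mathcomp Require Import boolp.
From Stdlib Require Import ProofIrrelevance FunctionalExtensionality.
From Stdlib Require List.

Set Implicit Arguments.
Unset Strict Implicit.
Unset Printing Implicit Defensive.

Import GRing.Theory.
Local Open Scope ring_scope.

Record quiver := Quiver {
  qvert : Type;
  qarr  : Type;
  qsrc  : qarr -> qvert;
  qtgt  : qarr -> qvert }.

Fixpoint is_qpath (Q : quiver) (v : qvert Q) (p : seq (qarr Q)) (w : qvert Q)
    : Prop :=
  match p with
  | [::] => v = w
  | a :: p' => qsrc a = v /\ is_qpath (qtgt a) p' w
  end.

Definition is_tree (Q : quiver) (r : qvert Q) : Prop :=
  forall w : qvert Q, exists! p : seq (qarr Q), is_qpath r p w.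

Definition stage (Q : quiver) (r : qvert Q) (i : nat) (w : qvert Q) : Prop :=
  exists p : seq (qarr Q), is_qpath r p w /\ size p = i.

Definition has_card (T : Type) (A : T -> Prop) (n : nat) : Prop :=
  exists f : 'I_n -> T, injective f /\ (forall w, A w <-> exists j, f j = w).

Definition barren (Q : quiver) (r : qvert Q) : Prop :=
  exists n : nat -> nat,
    (forall i, has_card (stage r i) (n i)) /\
    exists N : nat, forall i, (N <= i)%N -> n i = n N.

Definition infinite_type (I : Type) : Prop :=
  ~ exists n : nat, has_card (fun _ : I => True) n.

Unset Implicit Arguments.
Record rep (R : pzRingType) (Q : quiver) := Rep {
  rmod : qvert Q -> lmodType R;
  rmap : forall a : qarr Q, rmod (qsrc a) -> rmod (qtgt a);
  rmap_lin : forall a : qarr Q, linear (rmap a) }.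
Set Implicit Arguments.
Arguments rmod {R Q} r v.
Arguments rmap {R Q} r a _.
Arguments rmap_lin {R Q} r a.

Definition is_rep_hom (R : pzRingType) (Q : quiver) (X Y : rep R Q)
    (f : forall v : qvert Q, rmod X v -> rmod Y v) : Prop :=
  (forall v, linear (f v)) /\
  (forall (a : qarr Q) (x : rmod X (qsrc a)),
      f (qtgt a) (rmap X a x) = rmap Y a (f (qsrc a) x)).

Definition rep_mono (R : pzRingType) (Q : quiver) (X Y : rep R Q)
    (f : forall v : qvert Q, rmod X v -> rmod Y v) : Prop :=
  is_rep_hom f /\
  forall (Z : rep R Q) (g h : forall v : qvert Q, rmod Z v -> rmod X v),
    is_rep_hom g -> is_rep_hom h ->
    (forall v z, f v (g v z) = f v (h v z)) ->
    forall v z, g v z = h v z.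

Definition injective_rep (R : pzRingType) (Q : quiver) (E : rep R Q) : Prop :=
  forall (X Y : rep R Q)
         (f : forall v : qvert Q, rmod X v -> rmod Y v)
         (g : forall v : qvert Q, rmod X v -> rmod E v),
    rep_mono f -> is_rep_hom g ->
    exists h : forall v : qvert Q, rmod Y v -> rmod E v,
      is_rep_hom h /\ forall v x, h v (f v x) = g v x.

Section DirectSum.
Variables (R : pzRingType) (I : Type) (M : I -> lmodType R).

Definition fin_supp (f : forall i, M i) : Prop :=
  exists s : seq I, forall i, ~ List.In i s -> f i = 0.

Record dsum := DSum { dval : forall i, M i; dsuppP : fin_supp dval }.

Lemma dsum_ext (x y : dsum) : (forall i, dval x i = dval y i) -> x = y.
Proof.
case: x => fx px; case: y => fy py /= H.
have E : fx = fy by apply: functional_extensionality_dep.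
subst fy; by rewrite (proof_irrelevance _ px py).
Qed.

HB.instance Definition _ := gen_eqMixin dsum.
HB.instance Definition _ := gen_choiceMixin dsum.

Lemma dsum0_supp : fin_supp (fun i => 0).
Proof. by exists [::]. Qed.
Definition dsum0 : dsum := DSum dsum0_supp.

Lemma dsum_add_supp (x y : dsum) : fin_supp (fun i => dval x i + dval y i).
Proof.
case: x => fx [s1 h1]; case: y => fy [s2 h2] /=.
exists (s1 ++ s2) => i Hi.
rewrite h1 ?h2 ?addr0 // => H; apply: Hi; apply List.in_or_app; tauto.
Qed.
Definition dsum_add (x y : dsum) : dsum := DSum (dsum_add_supp x y).

Lemma dsum_opp_supp (x : dsum) : fin_supp (fun i => - dval x i).
Proof. case: x => fx [s h] /=; exists s => i Hi; by rewrite h ?oppr0. Qed.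
Definition dsum_opp (x : dsum) : dsum := DSum (dsum_opp_supp x).

Lemma dsum_scale_supp (a : R) (x : dsum) : fin_supp (fun i => a *: dval x i).
Proof. case: x => fx [s h] /=; exists s => i Hi; by rewrite h ?scaler0. Qed.
Definition dsum_scale (a : R) (x : dsum) : dsum := DSum (dsum_scale_supp a x).

Lemma dsum_addA : associative dsum_add.
Proof. by move=> x y z; apply: dsum_ext => i /=; rewrite addrA. Qed.
Lemma dsum_addC : commutative dsum_add.
Proof. by move=> x y; apply: dsum_ext => i /=; rewrite addrC. Qed.
Lemma dsum_add0 : left_id dsum0 dsum_add.
Proof. by move=> x; apply: dsum_ext => i /=; rewrite add0r. Qed.
Lemma dsum_addN : left_inverse dsum0 dsum_opp dsum_add.
Proof. by move=> x; apply: dsum_ext => i /=; rewrite addNr. Qed.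

HB.instance Definition _ :=
  GRing.isZmodule.Build dsum dsum_addA dsum_addC dsum_add0 dsum_addN.

Lemma dsum_scaleA a b v : dsum_scale a (dsum_scale b v) = dsum_scale (a * b) v.
Proof. by apply: dsum_ext => i /=; rewrite scalerA. Qed.
Lemma dsum_scale1 : left_id 1 dsum_scale.
Proof. by move=> x; apply: dsum_ext => i /=; rewrite scale1r. Qed.
Lemma dsum_scaleDr : right_distributive dsum_scale +%R.
Proof. by move=> a x y; apply: dsum_ext => i /=; rewrite scalerDr. Qed.
Lemma dsum_scaleDl v : {morph dsum_scale^~ v : a b / a + b}.
Proof. by move=> a b; apply: dsum_ext => i /=; rewrite scalerDl. Qed.

HB.instance Definition _ :=
  GRing.Zmodule_isLmodule.Build R dsum dsum_scaleA dsum_scale1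
    dsum_scaleDr dsum_scaleDl.

End DirectSum.

Lemma linear_map0 (R : pzRingType) (U V : lmodType R) (f : U -> V) :
  linear f -> f 0 = 0.
Proof.
move=> Lf; have := Lf 1 0 0; rewrite !scale1r !addr0 => H.
by apply: (@addrI _ (f 0)); rewrite addr0 -H.
Qed.

Section DsumRep.
Variables (R : pzRingType) (Q : quiver) (I : Type) (E : I -> rep R Q).

Definition dsum_mod (v : qvert Q) : lmodType R := dsum (fun i => rmod (E i) v).

Lemma dsum_map_supp (a : qarr Q) (x : dsum_mod (qsrc a)) :
  fin_supp (fun i => rmap (E i) a (dval x i)).
Proof.
case: x => fx [s h]; exists s => i Hi /=.
by rewrite h // (linear_map0 (rmap_lin (E i) a)).
Qed.

Definition dsum_map (a : qarr Q) (x : dsum_mod (qsrc a)) : dsum_mod (qtgt a) :=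
  DSum (dsum_map_supp x).

Lemma dsum_map_lin (a : qarr Q) : linear (@dsum_map a).
Proof.
move=> c x y; apply: dsum_ext => i /=.
exact: (rmap_lin (E i) a).
Qed.

Definition dsum_rep : rep R Q := @Rep R Q dsum_mod (@dsum_map) dsum_map_lin.

End DsumRep.

(* Main.v *)
Require Import Defs.
From HB Require Import structures.
From mathcomp Require Import all_boot all_algebra.
From mathcomp Require all_order archimedean boolp classical_sets.
From Stdlib Require ProofIrrelevance FunctionalExtensionality.
From Stdlib Require List.

Module P1.
From HB Require Import structures.
From mathcomp Require Import all_boot all_algebra.
From mathcomp Require Import boolp.
From Stdlib Require Import ProofIrrelevance FunctionalExtensionality.
From Stdlib Require List.
Set Implicit Arguments.
Unset Strict Implicit.
Unset Printing Implicit Defensive.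
Import GRing.Theory.
Local Open Scope ring_scope.

Section SubMod.
Variables (R : pzRingType) (M : lmodType R).
Record cpred := CPred {
  cp :> M -> Prop;
  cp0 : cp 0;
  cpD : forall x y, cp x -> cp y -> cp (x + y);
  cpN : forall x, cp x -> cp (- x);
  cpZ : forall a x, cp x -> cp (a *: x) }.
Variable C : cpred.
Record subm := SubM { sval : M; sP : C sval }.
Lemma subm_ext (x y : subm) : sval x = sval y -> x = y.
Proof.
case: x => x px; case: y => y py /= E; subst y.
by rewrite (proof_irrelevance _ px py).
Qed.
HB.instance Definition _ := gen_eqMixin subm.
HB.instance Definition _ := gen_choiceMixin subm.
Definition subm0 := SubM (cp0 C).
Definition submD (x y : subm) := SubM (cpD (sP x) (sP y)).
Definition submN (x : subm) := SubM (cpN (sP x)).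
Definition submZ a (x : subm) := SubM (cpZ a (sP x)).
Lemma submA : associative submD.
Proof. by move=> x y z; apply: subm_ext => /=; rewrite addrA. Qed.
Lemma submC : commutative submD.
Proof. by move=> x y; apply: subm_ext => /=; rewrite addrC. Qed.
Lemma subm0D : left_id subm0 submD.
Proof. by move=> x; apply: subm_ext => /=; rewrite add0r. Qed.
Lemma submND : left_inverse subm0 submN submD.
Proof. by move=> x; apply: subm_ext => /=; rewrite addNr. Qed.
HB.instance Definition _ := GRing.isZmodule.Build subm submA submC subm0D submND.
Lemma submZA a b v : submZ a (submZ b v) = submZ (a * b) v.
Proof. by apply: subm_ext => /=; rewrite scalerA. Qed.
Lemma submZ1 : left_id 1 submZ.
Proof. by move=> x; apply: subm_ext => /=; rewrite scale1r. Qed.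
Lemma submZDr : right_distributive submZ +%R.
Proof. by move=> a x y; apply: subm_ext => /=; rewrite scalerDr. Qed.
Lemma submZDl v : {morph submZ^~ v : a b / a + b}.
Proof. by move=> a b; apply: subm_ext => /=; rewrite scalerDl. Qed.
HB.instance Definition _ := GRing.Zmodule_isLmodule.Build R subm submZA submZ1 submZDr submZDl.
Lemma sval0 : sval (0 : subm) = 0. Proof. by []. Qed.
Lemma svalD (x y : subm) : sval (x + y) = sval x + sval y. Proof. by []. Qed.
Lemma svalN (x : subm) : sval (- x) = - sval x. Proof. by []. Qed.
Lemma svalZ a (x : subm) : sval (a *: x) = a *: sval x. Proof. by []. Qed.
End SubMod.

Section Prod.
Variables (R : pzRingType) (I : Type) (M : lmodType R).
Record fprod := FProd { pval : I -> M }.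
Lemma fprod_ext (x y : fprod) : (forall i, pval x i = pval y i) -> x = y.
Proof.
case: x => x; case: y => y /= E.
by rewrite (functional_extensionality _ _ E).
Qed.
HB.instance Definition _ := gen_eqMixin fprod.
HB.instance Definition _ := gen_choiceMixin fprod.
Definition fp0 := FProd (fun _ => 0).
Definition fpD (x y : fprod) := FProd (fun i => pval x i + pval y i).
Definition fpN (x : fprod) := FProd (fun i => - pval x i).
Definition fpZ a (x : fprod) := FProd (fun i => a *: pval x i).
Lemma fpA : associative fpD.
Proof. by move=> x y z; apply: fprod_ext => /= i; rewrite addrA. Qed.
Lemma fpC : commutative fpD.
Proof. by move=> x y; apply: fprod_ext => /= i; rewrite addrC. Qed.
Lemma fp0D : left_id fp0 fpD.
Proof. by move=> x; apply: fprod_ext => /= i; rewrite add0r. Qed.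
Lemma fpND : left_inverse fp0 fpN fpD.
Proof. by move=> x; apply: fprod_ext => /= i; rewrite addNr. Qed.
HB.instance Definition _ := GRing.isZmodule.Build fprod fpA fpC fp0D fpND.
Lemma fpZA a b v : fpZ a (fpZ b v) = fpZ (a * b) v.
Proof. by apply: fprod_ext => /= i; rewrite scalerA. Qed.
Lemma fpZ1 : left_id 1 fpZ.
Proof. by move=> x; apply: fprod_ext => /= i; rewrite scale1r. Qed.
Lemma fpZDr : right_distributive fpZ +%R.
Proof. by move=> a x y; apply: fprod_ext => /= i; rewrite scalerDr. Qed.
Lemma fpZDl v : {morph fpZ^~ v : a b / a + b}.
Proof. by move=> a b; apply: fprod_ext => /= i; rewrite scalerDl. Qed.
HB.instance Definition _ := GRing.Zmodule_isLmodule.Build R fprod fpZA fpZ1 fpZDr fpZDl.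
End Prod.

End P1.

Module P2.
From HB Require Import structures.
From mathcomp Require Import all_boot all_order all_algebra.
From mathcomp Require Import boolp.
From Stdlib Require Import ProofIrrelevance FunctionalExtensionality.
From mathcomp Require Import archimedean.
Set Implicit Arguments.
Unset Strict Implicit.
Unset Printing Implicit Defensive.
Import Order.TTheory GRing.Theory Num.Theory.
Local Open Scope ring_scope.

Definition frac (x : rat) : rat := x - (Num.floor x)%:~R.
Lemma frac_itv (x : rat) : (0 <= frac x) && (frac x < 1).
Proof.
rewrite /frac subr_ge0 floor_le /= ltrBlDl.
by have := floorD1_gt x; rewrite intrD addrC.
Qed.
Lemma floor_shift (x : rat) (m : int) : Num.floor (x + m%:~R) = Num.floor x + m.
Proof.
apply: floor_def; rewrite !intrD lerD2r floor_le /= -addrA (addrC m%:~R) addrA ltrD2r.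
by have := floorD1_gt x; rewrite intrD.
Qed.
Lemma frac_shift (x : rat) (m : int) : frac (x + m%:~R) = frac x.
Proof. by rewrite /frac floor_shift intrD opprD addrACA subrr addr0. Qed.
Lemma frac_eq (x y : rat) (m : int) : x = y + m%:~R -> frac x = frac y.
Proof. by move=> ->; rewrite frac_shift. Qed.
Lemma fracK (x : rat) : 0 <= x < 1 -> frac x = x.
Proof.
move=> H; rewrite /frac (@floor_def _ x 0) ?subr0 //.
Qed.
Lemma frac_fracl (x y : rat) : frac (frac x + y) = frac (x + y).
Proof. by apply: (@frac_eq _ _ (- Num.floor x)); rewrite {1}/frac intrN addrAC. Qed.
Lemma frac_fracr (x y : rat) : frac (x + frac y) = frac (x + y).
Proof. by rewrite addrC frac_fracl addrC. Qed.

Record QZ := MkQZ { qv : rat; qP : (0 <= qv) && (qv < 1) }.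
Lemma QZ_ext (x y : QZ) : qv x = qv y -> x = y.
Proof.
case: x => x px; case: y => y py /= E; subst y.
by rewrite (proof_irrelevance _ px py).
Qed.
HB.instance Definition _ := gen_eqMixin QZ.
HB.instance Definition _ := gen_choiceMixin QZ.
Definition qfrac (x : rat) : QZ := MkQZ (frac_itv x).
Lemma qvK (x : QZ) : qfrac (qv x) = x.
Proof. by apply: QZ_ext; rewrite /= fracK //; case: x. Qed.
Definition qz0 := qfrac 0.
Definition qzD (x y : QZ) := qfrac (qv x + qv y).
Definition qzN (x : QZ) := qfrac (- qv x).
Lemma qzA : associative qzD.
Proof.
move=> x y z; apply: QZ_ext; rewrite /= frac_fracl frac_fracr.
by rewrite addrA.
Qed.
Lemma qzC : commutative qzD.
Proof. by move=> x y; apply: QZ_ext; rewrite /= addrC. Qed.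
Lemma qz0D : left_id qz0 qzD.
Proof.
move=> x; apply: QZ_ext; rewrite /= fracK ?add0r ?fracK //; case: x => //.
Qed.
Lemma qzND : left_inverse qz0 qzN qzD.
Proof. by move=> x; apply: QZ_ext; rewrite /= frac_fracl addNr. Qed.
HB.instance Definition _ := GRing.isZmodule.Build QZ qzA qzC qz0D qzND.

Lemma qfracD (x y : rat) : qfrac (x + y) = qfrac x + qfrac y.
Proof. by apply: QZ_ext; rewrite /= frac_fracl frac_fracr. Qed.
Lemma qfrac0 : qfrac 0 = 0. Proof. by []. Qed.
Lemma qfracMz (x : rat) (n : int) : qfrac (x *~ n) = qfrac x *~ n.
Proof.
have H : forall m : nat, qfrac (x *+ m) = qfrac x *+ m.
  by elim=> [|m IH]; rewrite ?mulr0n // !mulrS qfracD IH.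
case: n => m; first by rewrite /= -!pmulrn H.
rewrite !NegzE !mulrNz.
have Hn : qfrac (- (x *+ m.+1)) = - (qfrac x *+ m.+1).
  by apply: (@addrI _ (qfrac x *+ m.+1)); rewrite -H -qfracD !subrr.
exact: Hn.
Qed.
Lemma qfrac_int (n : int) : qfrac n%:~R = 0.
Proof. by apply: QZ_ext; rewrite /= (@frac_eq _ 0 n) ?add0r // fracK. Qed.

Lemma qz_div (d : QZ) (m : nat) : (0 < m)%N -> exists e : QZ, e *~ m = d.
Proof.
move=> m0; exists (qfrac (qv d / m%:R)).
rewrite -qfracMz -[in RHS](qvK d); congr qfrac.
rewrite -[_ *~ _]/(_ *+ m) -[_ *+ m]mulr_natr -mulrA mulVf ?mulr1 // pnatr_eq0 -lt0n; exact: m0.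
Qed.

End P2.

Module P3.
From HB Require Import structures.
From mathcomp Require Import all_boot all_order all_algebra archimedean.
From mathcomp Require Import boolp classical_sets.
From Stdlib Require Import ProofIrrelevance FunctionalExtensionality.
Import P2.
Set Implicit Arguments.
Unset Strict Implicit.
Unset Printing Implicit Defensive.
Import Order.TTheory GRing.Theory Num.Theory.
Local Open Scope ring_scope.

Section ZExt.
Variable B : zmodType.
Definition subgrp (C : B -> Prop) := C 0 /\ (forall x y, C x -> C y -> C (x - y)).
Definition addon (C : B -> Prop) (h : B -> QZ) :=
  forall x y, C x -> C y -> h (x - y) = h x - h y.

Lemma sg_opp C : subgrp C -> forall x, C x -> C (- x).
Proof. by case=> C0 CB x Cx; rewrite -sub0r; apply: CB. Qed.
Lemma sg_add C : subgrp C -> forall x y, C x -> C y -> C (x + y).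
Proof.
move=> S x y Cx Cy; rewrite -[y]opprK; apply: S.2 => //; exact: sg_opp.
Qed.
Lemma sg_mulz C : subgrp C -> forall x n, C x -> C (x *~ n).
Proof.
move=> S x n Cx.
have Hn : forall m : nat, C (x *+ m).
  elim=> [|m IH]; first by rewrite mulr0n; exact: S.1.
  by rewrite mulrS; apply: sg_add.
case: n => m; first exact: Hn.
rewrite NegzE mulrNz; apply: sg_opp => //; exact: (Hn m.+1).
Qed.
Lemma ad_0 C h : subgrp C -> addon C h -> h 0 = 0.
Proof. by move=> S A; have := A 0 0 S.1 S.1; rewrite !subrr. Qed.
Lemma ad_opp C h : subgrp C -> addon C h -> forall x, C x -> h (- x) = - h x.
Proof.
move=> S A x Cx; have := A 0 x S.1 Cx; rewrite sub0r (ad_0 S A) sub0r //.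
Qed.
Lemma ad_add C h : subgrp C -> addon C h ->
  forall x y, C x -> C y -> h (x + y) = h x + h y.
Proof.
move=> S A x y Cx Cy; have E : x + y = x - (- y) by rewrite opprK.
have Cy' : C (- y) by exact: sg_opp.
by rewrite E A // (ad_opp S A) // opprK.
Qed.
Lemma ad_mulz C h : subgrp C -> addon C h ->
  forall x n, C x -> h (x *~ n) = h x *~ n.
Proof.
move=> S A x n Cx.
have Hn : forall m : nat, h (x *+ m) = h x *+ m.
  elim=> [|m IH]; first by rewrite !mulr0n (ad_0 S A).
  rewrite !mulrS (ad_add S A) ?IH //; exact: (sg_mulz S m).
case: n => m; first exact: Hn.
rewrite !NegzE !mulrNz (ad_opp S A); last exact: (sg_mulz S m.+1).
by rewrite (Hn m.+1).
Qed.

Record pext := PExt { pC : B -> Prop; ph : B -> QZ; pS : subgrp pC; pA : addon pC ph }.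
Definition ple (p q : pext) :=
  (forall x, pC p x -> pC q x) /\ (forall x, pC p x -> ph q x = ph p x).

Lemma ple_refl p : ple p p. Proof. by split. Qed.
Lemma ple_trans p q s : ple p q -> ple q s -> ple p s.
Proof.
case=> H1 H2 [H3 H4]; split=> x Hx; first by auto.
by rewrite H4 ?H2 //; auto.
Qed.

Section Step.
Variables (p : pext) (b : B) (d : QZ).
Hypothesis Hd : forall n, pC p (b *~ n) -> ph p (b *~ n) = d *~ n.
Let C := pC p.
Let h := ph p.
Let S := @pS p.
Let A := @pA p.
Definition C' x := exists c, exists n, C c /\ x = c + b *~ n.

Lemma wd c n c' n' : C c -> C c' -> c + b *~ n = c' + b *~ n' ->
  h c + d *~ n = h c' + d *~ n'.
Proof.
move=> Cc Cc' E.
have E2 : b *~ (n - n') = c' - c.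
  rewrite mulrzBr; apply/eqP; rewrite subr_eq addrAC -E addrAC subrr add0r //.
have Cb : C (b *~ (n - n')) by rewrite E2; apply: S.2.
have := Hd Cb; rewrite E2 A // mulrzBr => E3.
rewrite /h; move/eqP: E3; rewrite subr_eq => /eqP ->.
by rewrite addrAC subrK addrC.
Qed.

Definition h' (x : B) : QZ :=
  match pselect (C' x) with
  | left H => let c := projT1 (cid H) in
              h c + d *~ projT1 (cid (proj2_sig (cid H)))
  | right _ => 0
  end.

Lemma h'E c n : C c -> h' (c + b *~ n) = h c + d *~ n.
Proof.
move=> Cc; rewrite /h'; case: pselect => [H|[]]; last by exists c, n.
case: (cid H) => c1 /= H1; case: (cid H1) => n1 /= [Cc1 E].
by apply: wd => //; rewrite E.
Qed.

Lemma C'S : subgrp C'.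
Proof.
split; first by exists 0, 0; split; [exact: S.1 | rewrite mulr0z addr0].
move=> x y [c [n [Cc ->]]] [c' [n' [Cc' ->]]].
exists (c - c'), (n - n'); split; first exact: S.2.
by rewrite mulrzBr opprD addrACA.
Qed.

Lemma C'A : addon C' h'.
Proof.
move=> x y [c [n [Cc ->]]] [c' [n' [Cc' ->]]].
have -> : c + b *~ n - (c' + b *~ n') = (c - c') + b *~ (n - n').
  by rewrite mulrzBr opprD addrACA.
rewrite !h'E //; last exact: S.2.
by rewrite /h A // mulrzBr opprD addrACA.
Qed.

Lemma step : exists q, ple p q /\ pC q b.
Proof.
exists (PExt C'S C'A); split; last by exists 0, 1; split; [exact: S.1 | rewrite add0r].
split=> x Cx /=; first by exists x, 0; rewrite mulr0z addr0.
by have := h'E 0 Cx; rewrite !mulr0z !addr0.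
Qed.
End Step.

Lemma find_d (p : pext) (b : B) :
  exists d, forall n, pC p (b *~ n) -> ph p (b *~ n) = d *~ n.
Proof.
have S := @pS p; have A := @pA p.
case: (pselect (exists m : nat, (0 < m)%N && `[< pC p (b *+ m) >])) => [Ex|NEx].
- case: (ex_minnP Ex) => m0 /andP[m0pos /asboolP Cm0] minm.
  have [e He] := qz_div (ph p (b *+ m0)) m0pos.
  exists e => n Cn.
  have m0z : (0 < m0%:Z)%R by rewrite ltz_nat.
  have Er : b *~ (n %% m0%:Z)%Z = b *~ n - b *~ ((n %/ m0%:Z)%Z * m0%:Z).
    by rewrite -mulrzBr.
  have Cr : pC p (b *~ (n %% m0%:Z)%Z).
    rewrite Er; apply: S.2 => //; rewrite mulrC mulrzA; exact: sg_mulz.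
  have r0 : (n %% m0%:Z)%Z = 0.
    have ge0 := modz_ge0 n (lt0r_neq0 m0z); have lt := ltz_pmod n m0z.
    move: Cr ge0 lt; case: (n %% m0%:Z)%Z => [[|r]|r] // Cr _ rlt.
    have := minm r.+1; rewrite /= (asboolT Cr) => /(_ isT).
    by rewrite leqNgt -ltz_nat rlt.
  rewrite (divz_eq n m0%:Z) r0 addr0 (mulrC _ m0%:Z) mulrzA (ad_mulz S A) //.
  by change (b *~ m0%:Z) with (b *+ m0); rewrite -He -mulrzA.
- exists 0 => n Cn.
  case: n Cn => m Cm.
  + case: m Cm => [|m] Cm; first by rewrite mulr0z (ad_0 S A) mulr0z.
    by exfalso; apply: NEx; exists m.+1; apply/andP; split=> //; apply/asboolP.
  + exfalso; apply: NEx; exists m.+1; apply/andP; split=> //; apply/asboolP.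
    move: Cm; rewrite NegzE mulrNz => Cm.
    by rewrite -[b *+ m.+1]opprK; apply: sg_opp.
Qed.

Section Zorn.
Variables (C0 : B -> Prop) (h0 : B -> QZ) (S0 : subgrp C0) (A0 : addon C0 h0).
Let p0 := PExt S0 A0.
Let T := {p : pext | ple p0 p}.
Let R (s t : T) : bool := `[< ple (sval s) (sval t) >].
Let t0 : T := exist _ p0 (ple_refl p0).

Section Chain.
Variables (AA : set T) (tot : total_on AA R) (t1 : T) (At1 : AA t1).
Let UC x := exists t, AA t /\ pC (sval t) x.
Let Uh x := match pselect (UC x) with
  | left H => ph (sval (projT1 (cid H))) x | right _ => 0 end.
Lemma tot' s t : AA s -> AA t -> ple (sval s) (sval t) \/ ple (sval t) (sval s).
Proof. by move=> As At; case: (tot As At) => /asboolP; auto. Qed.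
Lemma Uh_spec t x : AA t -> pC (sval t) x -> Uh x = ph (sval t) x.
Proof.
move=> At Cx; rewrite /Uh; case: pselect => [H|[]]; last by exists t.
case: (cid H) => t' /= [At' Cx'].
by case: (tot' At At') => [[_ ->]|[_ ->]].
Qed.
Lemma join2 x y : UC x -> UC y -> exists t, AA t /\ pC (sval t) x /\ pC (sval t) y.
Proof.
move=> [s [As Cx]] [t [At Cy]].
case: (tot' As At) => [[H _]|[H _]]; [exists t | exists s]; auto.
Qed.
Lemma US : subgrp UC.
Proof.
split; first by exists t1; split=> //; exact: (@pS _).1.
move=> x y Hx Hy; have [t [At [Cx Cy]]] := join2 Hx Hy.
exists t; split=> //; exact: (@pS _).2.
Qed.
Lemma UA : addon UC Uh.
Proof.
move=> x y Hx Hy; have [t [At [Cx Cy]]] := join2 Hx Hy.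
rewrite !(Uh_spec At) //; first exact: (@pA _).
exact: (@pS _).2.
Qed.
Let U := PExt US UA.
Lemma Uup : ple p0 U.
Proof.
have H := svalP t1; split=> x Cx.
  by exists t1; split=> //; apply: H.1.
by rewrite /= (Uh_spec At1) ?H.2 //; apply: H.1.
Qed.
Lemma Ubound : exists t : T, forall s, AA s -> R s t.
Proof.
exists (exist _ U Uup) => s As; apply/asboolP; split=> x Cx /=.
  by exists s.
by rewrite (Uh_spec As).
Qed.
End Chain.

Lemma zext : exists H : B -> QZ,
  (forall x y, H (x - y) = H x - H y) /\ (forall x, C0 x -> H x = h0 x).
Proof.
have [M premax] : exists t, premaximal R t.
  apply: (@ZL_preorder T t0 R).
  - by move=> t; apply/asboolP; exact: ple_refl.
  - by move=> r s t /asboolP H1 /asboolP H2; apply/asboolP; exact: ple_trans H2.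
  - move=> AA tot; case: (pselect (exists t, AA t)) => [[t1 At1]|NE].
      exact: (Ubound tot At1).
    by exists t0 => s As; exfalso; apply: NE; exists s.
have allC : forall b, pC (sval M) b.
  move=> b; have [d Hd] := find_d (sval M) b.
  have [q [Mq Cq]] := step Hd.
  have q0 : ple p0 q by apply: ple_trans (svalP M) Mq.
  have /asboolP [H _] := premax (exist _ q q0) (introT (asboolP _) Mq).
  exact: H.
exists (ph (sval M)); split.
  by move=> x y; apply: (@pA _).
by move=> x Cx; rewrite ((svalP M).2 x Cx).
Qed.
End Zorn.
End ZExt.

End P3.

Module P4.
From HB Require Import structures.
From mathcomp Require Import all_boot all_order all_algebra archimedean.
From mathcomp Require Import boolp classical_sets.
From Stdlib Require Import ProofIrrelevance FunctionalExtensionality.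
Import P1 P2 P3.
Set Implicit Arguments.
Unset Strict Implicit.
Unset Printing Implicit Defensive.
Import Order.TTheory GRing.Theory Num.Theory.
Local Open Scope ring_scope.

Section Lin.
Variables (R : pzRingType) (U V : lmodType R) (f : U -> V) (Lf : linear f).
Lemma lin0 : f 0 = 0. Proof. exact: linear_map0. Qed.
Lemma linD x y : f (x + y) = f x + f y.
Proof. by have := Lf 1 x y; rewrite !scale1r. Qed.
Lemma linZ a x : f (a *: x) = a *: f x.
Proof. by have := Lf a x 0; rewrite !addr0 lin0 addr0. Qed.
Lemma linN x : f (- x) = - f x.
Proof. by rewrite -scaleN1r linZ scaleN1r. Qed.
Lemma linB x y : f (x - y) = f x - f y.
Proof. by rewrite linD linN. Qed.
End Lin.

Lemma subadd (U : zmodType) (f : U -> QZ) :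
  (forall x y, f (x - y) = f x - f y) -> forall x y, f (x + y) = f x + f y.
Proof.
move=> A x y; have f0 : f 0 = 0 by have := A 0 0; rewrite !subrr.
have fN : f (- y) = - f y by have := A 0 y; rewrite !sub0r f0 sub0r.
have E : x + y = x - (- y) by rewrite opprK.
by rewrite E A fN opprK.
Qed.

Section HomZ.
Variable R : pzRingType.
Definition zadd (f : R -> QZ) := forall x y, f (x - y) = f x - f y.
Record homz := HZ { hf : R -> QZ; hadd : zadd hf }.
Lemma homz_ext (x y : homz) : (forall s, hf x s = hf y s) -> x = y.
Proof.
case: x => x px; case: y => y py /= E.
have E' := functional_extensionality _ _ E; subst y.
by rewrite (proof_irrelevance _ px py).
Qed.
HB.instance Definition _ := gen_eqMixin homz.
HB.instance Definition _ := gen_choiceMixin homz.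
Lemma zadd0 (f : R -> QZ) : zadd f -> f 0 = 0.
Proof. by move=> A; have := A 0 0; rewrite !subrr. Qed.
Lemma zaddN (f : R -> QZ) : zadd f -> forall x, f (- x) = - f x.
Proof. by move=> A x; have := A 0 x; rewrite !sub0r (zadd0 A) sub0r. Qed.
Lemma zaddD (f : R -> QZ) : zadd f -> forall x y, f (x + y) = f x + f y.
Proof.
move=> A x y; have E : x + y = x - (- y) by rewrite opprK.
by rewrite E A zaddN // opprK.
Qed.
Lemma hz0_p : zadd (fun _ => 0). Proof. by move=> x y; rewrite subr0. Qed.
Lemma hzD_p (x y : homz) : zadd (fun s => hf x s + hf y s).
Proof. by move=> a b; rewrite !hadd opprD addrACA. Qed.
Lemma hzN_p (x : homz) : zadd (fun s => - hf x s).
Proof. by move=> a b; rewrite hadd opprB opprK addrC. Qed.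
Lemma hzZ_p (c : R) (x : homz) : zadd (fun s => hf x (s * c)).
Proof. by move=> a b; rewrite mulrBl hadd. Qed.
Definition hz0 := HZ hz0_p.
Definition hzD x y := HZ (hzD_p x y).
Definition hzN x := HZ (hzN_p x).
Definition hzZ c x := HZ (hzZ_p c x).
Lemma hzA : associative hzD.
Proof. by move=> x y z; apply: homz_ext => /= i; rewrite addrA. Qed.
Lemma hzC : commutative hzD.
Proof. by move=> x y; apply: homz_ext => /= i; rewrite addrC. Qed.
Lemma hz0D : left_id hz0 hzD.
Proof. by move=> x; apply: homz_ext => /= i; rewrite add0r. Qed.
Lemma hzND : left_inverse hz0 hzN hzD.
Proof. by move=> x; apply: homz_ext => /= i; rewrite addNr. Qed.
HB.instance Definition _ := GRing.isZmodule.Build homz hzA hzC hz0D hzND.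
Lemma hzZA a b v : hzZ a (hzZ b v) = hzZ (a * b) v.
Proof. by apply: homz_ext => /= i; rewrite mulrA. Qed.
Lemma hzZ1 : left_id 1 hzZ.
Proof. by move=> x; apply: homz_ext => /= i; rewrite mulr1. Qed.
Lemma hzZDr : right_distributive hzZ +%R.
Proof. by move=> a x y; apply: homz_ext. Qed.
Lemma hzZDl v : {morph hzZ^~ v : a b / a + b}.
Proof. by move=> a b; apply: homz_ext => /= i; rewrite mulrDr zaddD //; exact: hadd. Qed.
HB.instance Definition _ := GRing.Zmodule_isLmodule.Build R homz hzZA hzZ1 hzZDr hzZDl.
Lemma hfD (x y : homz) s : hf (x + y) s = hf x s + hf y s. Proof. by []. Qed.
Lemma hfN (x : homz) s : hf (- x) s = - hf x s. Proof. by []. Qed.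
Lemma hfZ c (x : homz) s : hf (c *: x) s = hf x (s * c). Proof. by []. Qed.
Lemma hf0 s : hf (0 : homz) s = 0. Proof. by []. Qed.

Lemma homz_inj (A B : lmodType R) (phi : A -> B) (G : A -> homz) :
  linear phi -> injective phi -> linear G ->
  exists H : B -> homz, linear H /\ forall a, H (phi a) = G a.
Proof.
move=> Lphi Iphi LG.
pose C0 := fun b => exists a, phi a = b.
pose h0 := fun b => match pselect (C0 b) with
  | left H => hf (G (projT1 (cid H))) 1 | right _ => 0 end.
have h0E : forall a, h0 (phi a) = hf (G a) 1.
  move=> a; rewrite /h0; case: pselect => [H|[]]; last by exists a.
  by case: (cid H) => a' /= /Iphi ->.
have S0 : subgrp C0.
  split; first by exists 0; exact: lin0.
  by move=> x y [a <-] [a' <-]; exists (a - a'); rewrite linB.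
have A0 : addon C0 h0.
  move=> x y [a <-] [a' <-]; rewrite -linB // !h0E linB //.
have [H' [H'A H'E]] := zext S0 A0.
have Hp : forall b, zadd (fun s => H' (s *: b)).
  by move=> b x y; rewrite scalerBl H'A.
exists (fun b => HZ (Hp b)); split.
  move=> c x y; apply: homz_ext => s /=.
  by rewrite scalerDr scalerA (subadd H'A).
move=> a; apply: homz_ext => s /=.
rewrite -linZ // H'E; last by exists (s *: a).
by rewrite h0E linZ // hfZ mul1r.
Qed.
End HomZ.

Lemma homz_nz (R : nzRingType) : exists e : homz R, e <> 0.
Proof.
have [m0 [m0ge2 m0P]] : exists m0 : nat, (2 <= m0)%N /\
    forall n : int, (1 *~ n = 0 :> R) -> (n %% m0%:Z)%Z = 0.
  case: (pselect (exists m : nat, (0 < m)%N && (1 *+ m == 0 :> R))) => [Ex|NEx].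
  - case: (ex_minnP Ex) => m0 /andP[m0pos /eqP Cm0] minm.
    exists m0; split.
      case: m0 m0pos Cm0 {minm} => [|[|m]] //= _.
      by move=> E; exfalso; move: (@oner_neq0 R); rewrite -E mulr1n eqxx.
    move=> n Hn.
    have m0z : (0 < m0%:Z)%R by rewrite ltz_nat.
    have Er : (1 : R) *~ (n %% m0%:Z)%Z = 1 *~ n - 1 *~ ((n %/ m0%:Z)%Z * m0%:Z).
      by rewrite -mulrzBr.
    have Cr : (1 : R) *~ (n %% m0%:Z)%Z = 0.
      by rewrite Er Hn sub0r mulrC mulrzA; change ((1 : R) *~ m0%:Z) with (1 *+ m0 : R);
        rewrite Cm0 mul0rz oppr0.
    have ge0 := modz_ge0 n (lt0r_neq0 m0z); have lt := ltz_pmod n m0z.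
    move: Cr ge0 lt; case: (n %% m0%:Z)%Z => [[|r]|r] // Cr _ rlt.
    have := minm r.+1; rewrite /=.
    have -> : (1 *+ r.+1 == 0 :> R) by apply/eqP; exact: Cr.
    by move=> /(_ isT); rewrite leqNgt -ltz_nat rlt.
  - exists 2%N; split => // n Hn.
    suff -> : n = 0 by [].
    case: n Hn => [[|m]|m] // Hm; exfalso; apply: NEx; exists m.+1; rewrite /=.
      by apply/eqP; exact: Hm.
    by move: Hm; rewrite NegzE mulrNz => /eqP; rewrite oppr_eq0.
pose d := qfrac (m0%:R^-1).
have Cb : forall n : int, (fun x : R => x = 0) (1 *~ n) ->
    (fun _ : R => (0 : QZ)) (1 *~ n) = d *~ n.
  move=> n /= Hn; rewrite /d -qfracMz.
  rewrite (divz_eq n m0%:Z) (m0P n Hn) addr0 (mulrC _ m0%:Z) mulrzA.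
  have -> : m0%:R^-1 *~ m0%:Z = 1 :> rat.
    rewrite -[_ *~ _]/(_ *+ m0) -[_ *+ m0]mulr_natr mulVf // pnatr_eq0 -lt0n.
    by case: m0 m0ge2 {m0P d}.
  by rewrite qfrac_int.
have S0 : subgrp (fun x : R => x = 0).
  by split=> // x y -> ->; rewrite subrr.
have A0 : addon (fun x : R => x = 0) (fun _ => 0).
  by move=> x y _ _; rewrite subrr.
pose p0 := PExt S0 A0.
have Hd : forall n, pC p0 (1 *~ n) -> ph p0 (1 *~ n) = d *~ n by exact: Cb.
pose q := PExt (C'S p0 1) (C'A Hd).
have [H [HA HE]] := zext (@pS _ q) (@pA _ q).
have H1 : H 1 = d.
  rewrite HE; last by exists 0, 1; split; rewrite ?add0r ?mulr1z.
  have := h'E Hd 1 (erefl (0 : R)); rewrite add0r mulr1z /= => ->.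
  by rewrite add0r.
have Hp : zadd H by [].
exists (HZ Hp) => E.
have : d = 0 by rewrite -H1; exact: (congr1 (fun e : homz R => hf e 1) E).
move=> /(congr1 qv) /=; rewrite fracK.
  by move/eqP; rewrite invr_eq0 pnatr_eq0; by clear -m0ge2; case: m0 m0ge2.
by rewrite invr_ge0 ler0n /= invf_lt1 ?ltr0n ?ltr1n //; clear -m0ge2; case: m0 m0ge2.
Qed.

End P4.

Module P5.
From HB Require Import structures.
From mathcomp Require Import all_boot all_order all_algebra.
From mathcomp Require Import boolp.
From Stdlib Require Import ProofIrrelevance FunctionalExtensionality.
Import P1 P4.
Set Implicit Arguments.
Unset Strict Implicit.
Unset Printing Implicit Defensive.
Import GRing.Theory.
Local Open Scope ring_scope.

Section Paths.
Variable Q : quiver.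
Definition anc (u v : qvert Q) := exists p, is_qpath u p v.
Lemma qpath_cat (u v w : qvert Q) (p q : seq (qarr Q)) : is_qpath u p v -> is_qpath v q w -> is_qpath u (p ++ q) w.
Proof.
elim: p u => [|a p IH] u /=; first by move=> -> .
by move=> [Ha Hp] Hq; split=> //; apply: IH.
Qed.
Lemma anc_refl (u : qvert Q) : anc u u. Proof. by exists [::]. Qed.
Lemma anc_trans (u v w : qvert Q) : anc u v -> anc v w -> anc u w.
Proof. by move=> [p Hp] [q Hq]; exists (p ++ q); apply: qpath_cat Hp Hq. Qed.
Lemma anc_arrow (a : qarr Q) w : anc (qtgt a) w -> anc (qsrc a) w.
Proof. by move=> [p Hp]; exists (a :: p). Qed.

Variable r : qvert Q.
Hypothesis Htree : is_tree r.
Lemma anc_root (v : qvert Q) : anc r v.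
Proof. by have [p [Hp _]] := Htree v; exists p. Qed.
Lemma path_uniq (u v : qvert Q) (p p' : seq (qarr Q)) : is_qpath u p v -> is_qpath u p' v -> p = p'.
Proof.
move=> H1 H2; have [q Hq] := anc_root u.
have [p0 [_ U]] := Htree v.
have E1 := U _ (qpath_cat Hq H1); have E2 := U _ (qpath_cat Hq H2).
have K : forall (q0 p1 p2 : seq (qarr Q)), q0 ++ p1 = q0 ++ p2 -> p1 = p2.
  by elim=> // a q0 IH p1 p2 [/IH].
by apply: (K q); rewrite -E1 -E2.
Qed.
End Paths.

Section Reach.
Variables (R : pzRingType) (Q : quiver) (X : rep R Q).
Fixpoint reachp (v : qvert Q) (x : rmod X v) (p : seq (qarr Q)) (u : qvert Q)
   (z : rmod X u) {struct p} : Prop :=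
  match p with
  | [::] => exists e : v = u, eq_rect v (rmod X) x u e = z
  | a :: p' => exists e : qsrc a = v,
      reachp (rmap X a (eq_rect_r (rmod X) x e)) p' z
  end.
Lemma reachp_fun v x p u z z' : @reachp v x p u z -> @reachp v x p u z' -> z = z'.
Proof.
elim: p v x => [|a p IH] v x /=.
  by move=> [e <-] [e' <-]; rewrite (proof_irrelevance _ e e').
move=> [e H] [e' H']; rewrite (proof_irrelevance _ e e') in H.
exact: IH H H'.
Qed.
Lemma reachp_ex v p u : is_qpath v p u -> forall x, exists z, @reachp v x p u z.
Proof.
elim: p v => [|a p IH] v /=; first by move=> -> x; exists x; exists erefl.
move=> [e Hp] x; subst v; have [z Hz] := IH _ Hp (rmap X a x).
by exists z; exists erefl.
Qed.
Lemma reachp_path v x p u z : @reachp v x p u z -> is_qpath v p u.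
Proof.
elim: p v x => [|a p IH] v x /=; first by move=> [e _].
by move=> [e H]; split=> //; apply: IH H.
Qed.
Lemma reachp_step (a : qarr Q) x p u z :
  reachp (rmap X a x) p z -> @reachp (qsrc a) x (a :: p) u z.
Proof. by move=> H; exists erefl. Qed.
Lemma reachp_lin v x y p u z z' c : @reachp v x p u z -> @reachp v y p u z' ->
  @reachp v (c *: x + y) p u (c *: z + z').
Proof.
elim: p v x y => [|a p IH] v x y /=.
  by move=> [e <-] [e' <-]; subst u; rewrite (proof_irrelevance _ e' erefl); exists erefl.
move=> [e H] [e' H']; subst v; rewrite (proof_irrelevance _ e' erefl) in H'.
exists erefl; rewrite /= (rmap_lin X a); exact: IH.
Qed.
End Reach.

Lemma reachp_hom (R : pzRingType) (Q : quiver) (X Y : rep R Q)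
  (f : forall v, rmod X v -> rmod Y v) : is_rep_hom f ->
  forall v x p u z, @reachp _ _ X v x p u z -> @reachp _ _ Y v (f v x) p u (f u z).
Proof.
move=> [Lf Cf] v x p; elim: p v x => [|a p IH] v x u z /=.
  by move=> [e <-]; subst u; exists erefl.
move=> [e H]; subst v; exists erefl; rewrite /= -Cf; exact: IH.
Qed.

End P5.

Module P6.
From HB Require Import structures.
From mathcomp Require Import all_boot all_order all_algebra.
From mathcomp Require Import boolp.
From Stdlib Require Import ProofIrrelevance FunctionalExtensionality.
Import P1 P4 P5.
Set Implicit Arguments.
Unset Strict Implicit.
Unset Printing Implicit Defensive.
Import GRing.Theory.
Local Open Scope ring_scope.

Section IRep.
Variables (R : pzRingType) (Q : quiver) (r : qvert Q) (Htree : is_tree r).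
Variable E : lmodType R.
Variable w : qvert Q.

Definition cpI (v : qvert Q) : cpred E.
Proof.
refine (@CPred _ E (fun x => anc v w \/ x = 0) _ _ _ _).
- by right.
- by move=> x y [H|->] [H'|->]; rewrite ?addr0; auto.
- by move=> x [H|->]; rewrite ?oppr0; auto.
- by move=> a x [H|->]; rewrite ?scaler0; auto.
Defined.

Definition Imod (v : qvert Q) : lmodType R := subm (cpI v).

Definition Imap (a : qarr Q) (x : Imod (qsrc a)) : Imod (qtgt a) :=
  match pselect (anc (qtgt a) w) with
  | left H => @SubM _ _ (cpI (qtgt a)) (sval x) (or_introl H)
  | right _ => 0
  end.

Lemma Imap_in a x : anc (qtgt a) w -> sval (@Imap a x) = sval x.
Proof. by rewrite /Imap; case: pselect. Qed.
Lemma Imap_out a x : ~ anc (qtgt a) w -> @Imap a x = 0.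
Proof. by rewrite /Imap; case: pselect. Qed.
Lemma Iout v (x : Imod v) : ~ anc v w -> x = 0.
Proof. by move=> H; apply: subm_ext; case: (sP x). Qed.

Lemma Imap_lin a : linear (@Imap a).
Proof.
move=> c x y; case: (pselect (anc (qtgt a) w)) => H.
  by apply: subm_ext; rewrite /= !Imap_in.
by rewrite !Imap_out // scaler0 addr0.
Qed.

Definition Irep : rep R Q := @Rep R Q Imod Imap Imap_lin.

Lemma Ireach_val v x p u z : @reachp _ _ Irep v x p u z -> anc u w -> sval z = sval x.
Proof.
elim: p v x => [|a p IH] v x /=.
  by move=> [e <-] _; subst u.
move=> [e H] Hu; subst v; rewrite (IH _ _ H Hu) /=.
apply: Imap_in; apply: (anc_trans _ Hu); exists p; exact: reachp_path H.
Qed.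

Hypothesis Einj : forall (A B : lmodType R) (phi : A -> B) (G : A -> E),
  linear phi -> injective phi -> linear G ->
  exists H : B -> E, linear H /\ forall a, H (phi a) = G a.

Section Kernel.
Variables (X Y : rep R Q) (f : forall v, rmod X v -> rmod Y v).
Arguments f : clear implicits.
Hypothesis Hf : is_rep_hom f.
Definition cpK (v : qvert Q) : cpred (rmod X v).
Proof.
refine (@CPred _ (rmod X v) (fun x => f v x = 0) _ _ _ _).
- exact: lin0 (Hf.1 v).
- by move=> x y Hx Hy; rewrite (linD (Hf.1 v)) Hx Hy addr0.
- by move=> x Hx; rewrite (linN (Hf.1 v)) Hx oppr0.
- by move=> c x Hx; rewrite (linZ (Hf.1 v)) Hx scaler0.
Defined.
Definition Kmod v : lmodType R := subm (cpK v).
Lemma Kmap_p (a : qarr Q) (z : Kmod (qsrc a)) : cpK (qtgt a) (rmap X a (sval z)).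
Proof. by rewrite /= Hf.2 (sP z) (lin0 (rmap_lin Y a)). Qed.
Definition Kmap a (z : Kmod (qsrc a)) : Kmod (qtgt a) := SubM (Kmap_p z).
Lemma Kmap_lin a : linear (@Kmap a).
Proof. by move=> c x y; apply: subm_ext; rewrite /= (rmap_lin X a). Qed.
Definition Krep : rep R Q := @Rep R Q Kmod Kmap Kmap_lin.
End Kernel.

Lemma mono_inj (X Y : rep R Q) (f : forall v, rmod X v -> rmod Y v) :
  rep_mono f -> forall v, injective (f v).
Proof.
move=> [Hf Hc].
have K0 : forall v (z : rmod (Krep Hf) v), sval z = 0.
  have := Hc (Krep Hf) (fun v z => sval z) (fun v z => 0).
  have h1 : is_rep_hom (X:=Krep Hf) (Y:=X) (fun v z => sval z).
    by split=> // v c x y.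
  have h2 : is_rep_hom (X:=Krep Hf) (Y:=X) (fun v z => 0).
    split=> [v c x y|a x]; first by rewrite scaler0 addr0.
    by rewrite (lin0 (rmap_lin X a)).
  move=> /(_ h1 h2) H v z; apply: H => v' z'.
  by rewrite (sP z') (lin0 (Hf.1 v')).
move=> v x y Exy.
have Hz : cpK Hf v (x - y) by rewrite /= (linB (Hf.1 v)) Exy subrr.
have := K0 v (SubM Hz); rewrite /= => /eqP; rewrite subr_eq0 => /eqP //.
Qed.

Lemma Irep_inj : injective_rep Irep.
Proof.
move=> X Y f g Mf Hg.
have Hf := Mf.1; have fI := mono_inj Mf.
pose G := fun x : rmod X w => sval (g w x).
have LG : linear G by move=> c x y; rewrite /G (Hg.1 w).
have [H [LH HE]] := Einj (Hf.1 w) (fI w) LG.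
pose tr := fun v (y : rmod Y v) =>
  match pselect (exists z, exists p, @reachp _ _ Y v y p w z) with
  | left Hx => projT1 (cid Hx) | right _ => 0 end.
have trE : forall v y p z, @reachp _ _ Y v y p w z -> tr v y = z.
  move=> v y p z Hz; rewrite /tr; case: pselect => [Hx|[]]; last by exists z, p.
  case: (cid Hx) => z' /= [p' Hz'].
  have ep := path_uniq Htree (reachp_path Hz) (reachp_path Hz'); subst p'.
  exact: reachp_fun Hz' Hz.
pose h := fun v (y : rmod Y v) => match pselect (anc v w) with
  | left Hv => @SubM _ _ (cpI v) (H (tr v y)) (or_introl Hv)
  | right _ => 0 end : rmod Irep v.
have hin : forall v y, anc v w -> sval (h v y) = H (tr v y).
  by move=> v y Hv; rewrite /h; case: pselect.
exists h; split; first split.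
- move=> v c x y; case: (pselect (anc v w)) => Hv; last first.
    by rewrite /h; case: pselect => // _; rewrite scaler0 addr0.
  apply: subm_ext; rewrite /= !hin //.
  have [p Hp] := Hv.
  have [z1 H1] := reachp_ex Hp x; have [z2 H2] := reachp_ex Hp y.
  by rewrite (trE _ _ _ _ (reachp_lin c H1 H2)) (trE _ _ _ _ H1) (trE _ _ _ _ H2) LH.
- move=> a y; case: (pselect (anc (qtgt a) w)) => Ht.
    apply: subm_ext; rewrite /= Imap_in // !hin //; last exact: anc_arrow.
    have [p Hp] := Ht; have [z Hz] := reachp_ex Hp (rmap Y a y).
    by rewrite (trE _ _ _ _ Hz) (trE _ _ _ _ (reachp_step Hz)).
  by rewrite /= Imap_out // /h; case: pselect.
- move=> v x; case: (pselect (anc v w)) => Hv; last first.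
    by rewrite (Iout (g v x) Hv) /h; case: pselect.
  apply: subm_ext; rewrite /= hin //.
  have [p Hp] := Hv; have [z Hz] := reachp_ex Hp x.
  rewrite (trE _ _ _ _ (reachp_hom Hf Hz)) HE /G.
  by rewrite (Ireach_val (reachp_hom Hg Hz)) //; exact: anc_refl.
Qed.
End IRep.

End P6.

Module P7.
From HB Require Import structures.
From mathcomp Require Import all_boot all_order all_algebra.
From mathcomp Require Import boolp.
From Stdlib Require Import ProofIrrelevance FunctionalExtensionality.
From Stdlib Require List.
Import P1 P4 P5 P6.
Set Implicit Arguments.
Unset Strict Implicit.
Unset Printing Implicit Defensive.
Import GRing.Theory.
Local Open Scope ring_scope.

Section SumRep.
Variables (R : pzRingType) (Q : quiver) (r : qvert Q) (Htree : is_tree r).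
Variables (E : lmodType R) (e : E) (e0 : e <> 0).
Variables (w : nat -> qvert Q) (Hw : forall j k, j <> k -> ~ anc (w j) (w k)).

Definition Ew (j : nat) : rep R Q := Irep E (w j).
Definition S := dsum_rep Ew.

Definition cpY (v : qvert Q) : cpred (fprod nat E).
Proof.
refine (@CPred _ (fprod nat E) (fun y => forall j, ~ anc v (w j) -> pval y j = 0) _ _ _ _).
- by [].
- by move=> x y Hx Hy j Hj /=; rewrite Hx ?Hy ?addr0.
- by move=> x Hx j Hj /=; rewrite Hx ?oppr0.
- by move=> c x Hx j Hj /=; rewrite Hx ?scaler0.
Defined.
Definition Ymod v : lmodType R := subm (cpY v).
Definition Yfun (a : qarr Q) (y : Ymod (qsrc a)) : fprod nat E :=
  FProd (fun j => if `[< anc (qtgt a) (w j) >] then pval (sval y) j else 0).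
Lemma Ymap_p a y : cpY (qtgt a) (@Yfun a y).
Proof. by move=> j Hj /=; rewrite (asboolF Hj). Qed.
Definition Ymap a y : Ymod (qtgt a) := SubM (@Ymap_p a y).
Lemma Ymap_lin a : linear (@Ymap a).
Proof.
move=> c x y; apply: subm_ext; apply: fprod_ext => j /=.
by case: asboolP => _; rewrite ?scaler0 ?addr0.
Qed.
Definition Yrep : rep R Q := @Rep R Q Ymod Ymap Ymap_lin.

Lemma Yreach v x p u z : @reachp _ _ Yrep v x p u z -> forall j, anc u (w j) ->
  pval (sval z) j = pval (sval x) j.
Proof.
elim: p v x => [|a p IH] v x /=.
  by move=> [e' <-] j _; subst u.
move=> [e' H] j Hu; subst v; rewrite (IH _ _ H j Hu) /=.
have Ht : anc (qtgt a) (w j).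
  by apply: (anc_trans _ Hu); exists p; exact: reachp_path H.
by rewrite (asboolT Ht).
Qed.

Definition fS_p v (x : rmod S v) : cpY v (FProd (fun j => sval (dval x j))).
Proof. by move=> j Hj /=; case: (sP (dval x j)). Qed.
Definition fS v (x : rmod S v) : rmod Yrep v := SubM (@fS_p v x).

Lemma fS_hom : is_rep_hom fS.
Proof.
split.
  by move=> v c x y; apply: subm_ext; apply: fprod_ext.
move=> a x; apply: subm_ext; apply: fprod_ext => j /=.
case: asboolP => H; first by rewrite Imap_in.
by rewrite Imap_out.
Qed.

Lemma fS_mono : rep_mono fS.
Proof.
split; first exact: fS_hom.
move=> Z g h _ _ H v z; have := H v z => /(congr1 (fun y => pval (sval y))) E1.
apply: dsum_ext => j; apply: subm_ext.
exact: (congr1 (fun F => F j) E1).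
Qed.

Lemma id_hom : is_rep_hom (fun v (x : rmod S v) => x).
Proof. by split. Qed.

Lemma proj_hom j : is_rep_hom (X := S) (Y := Ew j) (fun v x => dval x j).
Proof. by split. Qed.

Lemma nat_notin (s : seq nat) : exists j, ~ List.In j s.
Proof.
exists (sumn s).+1.
suff : forall k, List.In k s -> (k <= sumn s)%N by move=> H /H; rewrite ltnn.
elim: s => //= a s IH k [->|/IH]; first exact: leq_addr.
move=> H; apply: leq_trans H _; exact: leq_addl.
Qed.

Lemma S_not_inj : ~ injective_rep S.
Proof.
move=> Hinj.
have [h [Hh hE]] := Hinj S Yrep fS (fun v x => x) fS_mono id_hom.
have y0_p : cpY r (FProd (fun _ => e)).
  by move=> j Hj; exfalso; apply: Hj; exact: anc_root.
pose y0 : rmod Yrep r := SubM y0_p.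
pose x0 := h r y0.
have [s Hs] := dsuppP x0.
have [j Hj] := nat_notin s.
have [p Hp] := anc_root Htree (w j).
have [y1 Hy1] := reachp_ex Hp y0.
pose dl := fun k => match pselect (anc (w j) (w k)) with
  | left H => @SubM _ _ (cpI E (w k) (w j)) e (or_introl H)
  | right _ => 0 end : rmod (Ew k) (w j).
have dl_p : fin_supp dl.
  exists [:: j] => k Hk; rewrite /dl; case: pselect => // H; exfalso.
  by apply: Hk; left; case: (pselect (j = k)) => // Hjk; exfalso; exact: (Hw Hjk H).
pose d : rmod S (w j) := DSum dl_p.
have Ey1 : y1 = fS d.
  apply: subm_ext; apply: fprod_ext => k /=; rewrite /dl.
  case: pselect => H /=.
    have Ek : k = j by case: (pselect (k = j)) => // Hkj; exfalso; exact: (Hw (nesym Hkj) H).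
    subst k; rewrite (Yreach Hy1) //.
  by rewrite (sP y1 k H).
have Hx := reachp_hom Hh Hy1.
rewrite Ey1 hE -/x0 in Hx.
have := Ireach_val (reachp_hom (proj_hom j) Hx) (anc_refl _).
rewrite Hs //= /dl; case: pselect => [H|[]]; last exact: anc_refl.
by move=> /= E1; apply: e0.
Qed.
End SumRep.

End P7.

Module P8.
From mathcomp Require Import all_boot.
From mathcomp Require Import boolp.
From Stdlib Require Import ProofIrrelevance.
From Stdlib Require List.
Import P5.
Set Implicit Arguments.
Unset Strict Implicit.
Unset Printing Implicit Defensive.

Section Comb.
Variables (Q : quiver) (r : qvert Q) (Htree : is_tree r).
Notation V := (qvert Q).
Definition child (b c : V) := exists a : qarr Q, qsrc a = b /\ qtgt a = c.
Definition vdec : forall x y : V, {x = y} + {x <> y} := fun x y => pselect (x = y).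
Definition finite (P : V -> Prop) := exists l, forall x, P x -> List.In x l.
Definition enum_of (P : V -> Prop) (l : list V) :=
  List.NoDup l /\ forall x, List.In x l <-> P x.

Lemma fin_enum P : finite P -> exists l, enum_of P l.
Proof.
move=> [l Hl].
exists (List.nodup vdec (List.filter (fun x => `[< P x >]) l)); split.
  exact: List.NoDup_nodup.
move=> x; rewrite List.nodup_In List.filter_In; split.
  by move=> [_ /asboolP].
by move=> Px; split; [exact: Hl | exact/asboolP].
Qed.

Lemma enum_len P l l' : enum_of P l -> enum_of P l' -> List.length l = List.length l'.
Proof.
move=> [N1 H1] [N2 H2]; apply/eqP; rewrite eqn_leq; apply/andP; split; apply/leP.
  by apply: List.NoDup_incl_length => // x /H1 /H2.
by apply: List.NoDup_incl_length => // x /H2 /H1.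
Qed.

Lemma enum_card P l : enum_of P l -> has_card P (List.length l).
Proof.
move=> [N H]; exists (fun j : 'I_(List.length l) => List.nth j l r); split.
  move=> i j E; apply: val_inj; move: (proj1 (List.NoDup_nth l r) N i j).
  by move=> /(_ (elimT ltP (ltn_ord i)) (elimT ltP (ltn_ord j)) E).
move=> x; split.
  move=> /H /(List.In_nth _ _ r) [n [/ltP nl <-]].
  by exists (Ordinal nl).
move=> [j <-]; apply/H; apply: List.nth_In; apply/ltP; exact: ltn_ord.
Qed.

Lemma stage0 (u x : V) : stage u 0 x <-> x = u.
Proof.
split; first by move=> [[|a p] [Hp //]] /=.
by move=> ->; exists [::].
Qed.
Lemma stageS (u x : V) k : stage u k.+1 x <-> exists c, child u c /\ stage c k x.
Proof.
split.
  move=> [p [Hp Hs]]; case: p Hp Hs => [|a p] //= [Ha Hp] [Hs].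
  by exists (qtgt a); split; [exists a | exists p].
move=> [c [[a [Ha Hc]] [p [Hp Hs]]]]; exists (a :: p); split => /=.
  by split => //; rewrite Hc.
by rewrite Hs.
Qed.

Lemma root_path v : exists q, is_qpath r q v.
Proof. exact: anc_root Htree v. Qed.

Lemma stage_root (u x : V) k : stage u k x -> exists d, stage r (d + k) x.
Proof.
move=> [p [Hp Hs]]; have [q Hq] := root_path u.
exists (size q); exists (q ++ p); split; first exact: qpath_cat Hq Hp.
by rewrite size_cat Hs.
Qed.

Lemma same_stage i (x y : V) : stage r i x -> stage r i y -> anc x y -> x = y.
Proof.
move=> [q [Hq Sq]] [q' [Hq' Sq']] [p Hp].
have E := path_uniq Htree (qpath_cat Hq Hp) Hq'.
have : size (q ++ p) = size q' by rewrite E.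
rewrite size_cat Sq Sq' => /(f_equal (subn^~ i)); rewrite addKn subnn => /size0nil Ep.
by subst p; move: Hp.
Qed.

Lemma sib_eq (b c c' x : V) p p' : child b c -> child b c' -> is_qpath c p x -> is_qpath c' p' x -> c = c'.
Proof.
move=> [a [Ha Hc]] [a' [Ha' Hc']] Hp Hp'; have [q Hq] := root_path b.
have H1 : is_qpath r (q ++ a :: p) x by apply: qpath_cat Hq _; split => //; rewrite Hc.
have H2 : is_qpath r (q ++ a' :: p') x by apply: qpath_cat Hq _; split => //; rewrite Hc'.
have E := path_uniq Htree H1 H2.
have K : forall (q0 p1 p2 : seq (qarr Q)), q0 ++ p1 = q0 ++ p2 -> p1 = p2.
  by elim=> // a0 q0 IH p1 p2 [/IH].
by move: (K _ _ _ E) => [Eaa _]; rewrite -Hc -Hc' Eaa.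
Qed.

Lemma sib_incomp (b c c' x : V) : child b c -> child b c' -> c <> c' -> anc c x ->
  ~ anc c' x /\ ~ anc x c'.
Proof.
move=> Hc Hc' Ncc [p Hp]; split.
  by move=> [p' Hp']; apply: Ncc; apply: sib_eq Hc Hc' Hp Hp'.
move=> [p' Hp']; apply: Ncc; apply: (@sib_eq b c c' c' (p ++ p') [::] Hc Hc' (qpath_cat Hp Hp') (erefl c')).
Qed.

Lemma child_anc (b c : V) : child b c -> anc b c.
Proof. by move=> [a [Ha Hc]]; exists [:: a]; rewrite /= Ha Hc. Qed.

Lemma inf_seq (P : V -> Prop) : ~ finite P ->
  exists w : nat -> V, (forall k, P (w k)) /\ (forall j k, j <> k -> w j <> w k).
Proof.
move=> NF.
have nx : forall l, exists x, P x /\ ~ List.In x l.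
  move=> l; case: (pselect (exists x, P x /\ ~ List.In x l)) => // N.
  exfalso; apply: NF; exists l => x Px.
  by case: (pselect (List.In x l)) => // Nx; exfalso; apply: N; exists x.
pose next := fun l => projT1 (cid (nx l)).
have nextP : forall l, P (next l) /\ ~ List.In (next l) l by move=> l; exact: (projT2 (cid (nx l))).
pose L := fix L k := match k with 0 => [::] | k'.+1 => next (L k') :: L k' end.
exists (fun k => next (L k)); split; first by move=> k; exact: (nextP _).1.
have inL : forall j k, (j < k)%N -> List.In (next (L j)) (L k).
  move=> j; elim=> // k IH; rewrite ltnS leq_eqVlt => /orP[/eqP ->|/IH]; first by left.
  by right.
move=> j k Njk E.
have [jk|kj] : (j < k)%N \/ (k < j)%N.
  case: (ltngtP j k) => //; by [left|right|move=> /Njk].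
  by apply: (nextP (L k)).2; rewrite -E; apply: inL.
by apply: (nextP (L j)).2; rewrite E; apply: inL.
Qed.

Section CaseB.
Hypothesis Hfin : forall i, finite (stage r i).
Lemma fin_stage (u : V) k : finite (stage u k).
Proof.
have [q Hq] := root_path u.
have [l Hl] := Hfin (size q + k).
exists l => x [p [Hp Hs]]; apply: Hl; exists (q ++ p); split; first exact: qpath_cat Hq Hp.
by rewrite size_cat Hs.
Qed.
Definition Lst (u : V) k := projT1 (cid (fin_enum (fin_stage u k))).
Lemma LstP (u : V) k : enum_of (stage u k) (Lst u k).
Proof. exact: (projT2 (cid (fin_enum (fin_stage u k)))). Qed.
Definition cnt (u : V) k := List.length (Lst u k).
Lemma cntE (u : V) k l : enum_of (stage u k) l -> List.length l = cnt u k.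
Proof. by move=> H; apply: enum_len H (LstP u k). Qed.
Definition evc (f : nat -> nat) := exists N, forall k, (N <= k)%N -> f k = f N.
Definition Pn (u : V) := ~ evc (cnt u).

Lemma fin_child (b : V) : finite (child b).
Proof.
have [l Hl] := fin_stage b 1; exists l => c Hc; apply: Hl.
by apply/stageS; exists c; split => //; apply/stage0.
Qed.

Lemma len_flat (f : V -> list V) (l : list V) :
  List.length (List.flat_map f l) =
  List.fold_right (fun c acc => (List.length (f c) + acc)%N) 0%N l.
Proof. by elim: l => //= c l IH; rewrite List.length_app IH. Qed.

Lemma nodup_flat (l : list V) (F : V -> list V) : List.NoDup l ->
  (forall c, List.In c l -> List.NoDup (F c)) ->
  (forall c c' x, List.In c l -> List.In c' l -> List.In x (F c) -> List.In x (F c') -> c = c') ->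
  List.NoDup (List.flat_map F l).
Proof.
elim: l => [|c l IH] /= Nl H1 H2; first by constructor.
inversion Nl as [|c1 l1 Nin Nl' E1]; subst.
apply: List.NoDup_app; first by apply: H1; left.
  apply: IH => //; first by move=> c' Hc'; apply: H1; right.
  by move=> c1 c2 x Hc1 Hc2; apply: H2; right.
move=> x Hx /List.in_flat_map [c' [Hc' Hx']].
by apply: Nin; rewrite (H2 c c' x (or_introl erefl) (or_intror Hc') Hx Hx').
Qed.

Lemma fold_eq (l : list V) (f g : V -> nat) : (forall c, List.In c l -> f c = g c) ->
  List.fold_right (fun c acc => (f c + acc)%N) 0%N l =
  List.fold_right (fun c acc => (g c + acc)%N) 0%N l.
Proof.
elim: l => //= c l IH H; rewrite (H c (or_introl erefl)) IH // => c' Hc'.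
by apply: H; right.
Qed.

Lemma unif_N (Ch : list V) : (forall c, List.In c Ch -> evc (cnt c)) ->
  exists N, forall c, List.In c Ch -> forall k, (N <= k)%N -> cnt c k = cnt c N.
Proof.
elim: Ch => [|c0 Ch IH] H; first by exists 0%N.
have [N1 H1] := IH (fun c Hc => H c (or_intror Hc)).
have [N0 H0] := H c0 (or_introl erefl).
exists (maxn N0 N1) => c [<-|Hc] k Hk.
  by rewrite H0 ?(leq_trans (leq_maxl _ _) Hk) // H0 // leq_maxl.
by rewrite H1 ?(leq_trans (leq_maxr _ _) Hk) // H1 // leq_maxr.
Qed.

Lemma sum_evc (b : V) : (forall c, child b c -> evc (cnt c)) -> evc (cnt b).
Proof.
move=> H.
have [Ch [NCh HCh]] := fin_enum (fin_child b).
pose sm := fun k => List.fold_right (fun c acc => (cnt c k + acc)%N) 0%N Ch.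
have cntS : forall k, cnt b k.+1 = sm k.
  move=> k; rewrite -(cntE (l := List.flat_map (fun c => Lst c k) Ch)).
    exact: len_flat.
  split.
    apply: nodup_flat => //; first by move=> c _; case: (LstP c k).
    move=> c c' x Hc Hc' Hx Hx'.
    have Sc : stage c k x by exact: (proj1 ((proj2 (LstP c k)) x) Hx).
    have Sc' : stage c' k x by exact: (proj1 ((proj2 (LstP c' k)) x) Hx').
    have cc : child b c by apply/HCh.
    have cc' : child b c' by apply/HCh.
    case: Sc => p [Hp _]; case: Sc' => p' [Hp' _].
    exact: (sib_eq cc cc' Hp Hp').
  move=> x; rewrite List.in_flat_map stageS; split.
    move=> [c [Hc Hx]]; exists c; split; first exact/HCh.
    exact: (proj1 ((proj2 (LstP c k)) x) Hx).
  move=> [c [Hc Hx]]; exists c; split; first exact/HCh.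
  exact: (proj2 ((proj2 (LstP c k)) x) Hx).
have [N HN] := unif_N (fun c Hc => H c (proj1 (HCh c) Hc)).
exists N.+1 => k Hk; case: k Hk => // k Hk; rewrite !cntS /sm.
apply: (fold_eq (f := fun c => cnt c k) (g := fun c => cnt c N)) => c Hc.
by apply: HN.
Qed.

Lemma step_ex (u : V) : Pn u -> exists cc : V * V, exists b, anc u b /\ child b cc.1 /\
  child b cc.2 /\ cc.1 <> cc.2 /\ Pn cc.1.
Proof.
move=> Pu; case: (pselect (exists cc : V * V, exists b, anc u b /\ child b cc.1 /\
  child b cc.2 /\ cc.1 <> cc.2 /\ Pn cc.1)) => // Hno; exfalso.
have C1 : forall b, anc u b -> Pn b -> exists c, child b c /\ Pn c /\
    forall c', child b c' -> c' = c.
  move=> b ub Pb.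
  have [c [cb Pc]] : exists c, child b c /\ Pn c.
    case: (pselect (exists c, child b c /\ Pn c)) => // N; exfalso; apply: Pb.
    apply: sum_evc => c cb; case: (pselect (evc (cnt c))) => // Nc.
    by exfalso; apply: N; exists c.
  exists c; split=> //; split=> // c' cb'; case: (pselect (c' = c)) => // N.
  by exfalso; apply: Hno; exists (c, c'), b; split => //; split => //; split => //; split => //; apply: nesym.
have C2 : forall k x, anc u x -> Pn x -> exists y, enum_of (stage x k) [:: y].
  elim=> [|k IH] x ux Px.
    exists x; split; first by constructor; [by [] | constructor].
    by move=> z; rewrite stage0; split => [[->|[]]|->]; [|left].
  have [c [cx [Pc Uc]]] := C1 x ux Px.
  have [y [Ny Hy]] := IH c (anc_trans ux (child_anc cx)) Pc.
  exists y; split => // z; rewrite Hy stageS; split.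
    by move=> Sz; exists c.
  by move=> [c' [cx' Sz]]; rewrite -(Uc c' cx').
apply: (Pu); exists 0%N => k _.
have [y Hy] := C2 k u (anc_refl u) Pu; have [y0 Hy0] := C2 0%N u (anc_refl u) Pu.
by rewrite -(cntE Hy) -(cntE Hy0).
Qed.

Lemma caseB : ~ barren r -> exists w : nat -> V, forall j k, j <> k -> ~ anc (w j) (w k).
Proof.
move=> NB.
have Pr : Pn r.
  move=> [N HN]; apply: NB; exists (cnt r); split; last by exists N.
  move=> i; exact: enum_card (LstP r i).
pose nxt := fun u => match pselect (Pn u) with
  | left H => projT1 (cid (step_ex H)) | right _ => (u, u) end.
have nxtP : forall u, Pn u -> exists b, anc u b /\ child b (nxt u).1 /\
    child b (nxt u).2 /\ (nxt u).1 <> (nxt u).2 /\ Pn (nxt u).1.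
  by move=> u Pu; rewrite /nxt; case: pselect => // H; exact: (projT2 (cid (step_ex H))).
pose U := fix U k := match k with 0 => r | k'.+1 => (nxt (U k')).1 end.
have PU : forall k, Pn (U k).
  by elim=> //= k IH; have [b [_ [_ [_ [_ H]]]]] := nxtP _ IH.
have ancU : forall j k, (j <= k)%N -> anc (U j) (U k).
  move=> j; elim=> [|k IH]; first by rewrite leqn0 => /eqP ->; exact: anc_refl.
  rewrite leq_eqVlt => /orP[/eqP ->|]; first exact: anc_refl.
  rewrite ltnS => /IH H; apply: (anc_trans H).
  have [b [Hb [Hc _]]] := nxtP _ (PU k).
  exact: anc_trans Hb (child_anc Hc).
exists (fun k => (nxt (U k)).2).
have key : forall j k, (j < k)%N -> ~ anc (nxt (U j)).2 (nxt (U k)).2 /\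
    ~ anc (nxt (U k)).2 (nxt (U j)).2.
  move=> j k jk.
  have [b [Hb [Hc [Hc' [Ncc _]]]]] := nxtP _ (PU j).
  apply: (sib_incomp Hc Hc' Ncc).
  have [b' [Hb' [_ [Hc2 _]]]] := nxtP _ (PU k).
  apply: anc_trans (ancU j.+1 k jk) _.
  exact: anc_trans Hb' (child_anc Hc2).
move=> j k Njk; case: (ltngtP j k) => [jk|kj|E]; last by [].
  by case: (key j k jk).
by case: (key k j kj) => _ H; apply: H.
Qed.
End CaseB.

Lemma antichain : ~ barren r -> exists w : nat -> V, forall j k, j <> k -> ~ anc (w j) (w k).
Proof.
move=> NB; case: (pselect (forall i, finite (stage r i))) => [F|NF].
  exact: caseB.
have [i Ni] : exists i, ~ finite (stage r i).
  by case: (pselect (exists i, ~ finite (stage r i))) => // N; exfalso; apply: NF => i;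
    case: (pselect (finite (stage r i))) => // Ni; exfalso; apply: N; exists i.
have [w [Sw Dw]] := inf_seq Ni.
exists w => j k Njk A; apply: (Dw j k Njk); exact: same_stage (Sw j) (Sw k) A.
Qed.
End Comb.

End P8.

Import P1 P4 P5 P6 P7 P8.
Lemma nat_infinite : infinite_type nat.
Proof.
move=> [n [f [Hf Hs]]].
have [j Hj] := nat_notin [seq f i | i <- enum 'I_n].
have [k Ek] := (proj1 (Hs j)) I.
apply: Hj; rewrite -Ek.
have : f k \in [seq f i | i <- enum 'I_n] by rewrite map_f // mem_enum.
elim: [seq f i | i <- enum 'I_n] => //= a s IH.
by rewrite inE => /orP[/eqP ->|/IH]; [left|right].
Qed.

Theorem lemma5p2 (R : nzRingType) (Q : quiver) (r : qvert Q) :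
  is_tree r -> ~ barren r ->
  exists (I : Type) (E : I -> rep R Q),
    infinite_type I /\
    (forall i : I, injective_rep (E i)) /\
    ~ injective_rep (dsum_rep E).
Proof.
move=> Ht NB.
have [w Hw] := antichain Ht NB.
have [e e0] := homz_nz R.
exists nat, (Ew (homz R) w); split; first exact: nat_infinite.
split.
  move=> i; apply: (Irep_inj Ht); exact: homz_inj.
exact: (S_not_inj Ht e0 Hw).
Qed.
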